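(* Let $\Sigma$ be a set, let $1\le p<\infty$, suppose $d$ is a separating quasi-metric on $\Sigma$, $\alpha,\beta:\Sigma^+\to\mathbb{R}$ with $\alpha^p,\beta^p\in\Gamma(\Sigma)$, and let $D$ be the $\ell^p$ edit distance on $\Sigma^*$ extending $d$, $\alpha$ and $\beta$. Assume in addition that for all $a,b\in\Sigma$ and $u,v,x\in\Sigma^*$: (W1) $d^p(a,b)+\beta^p(ubv)\ge\beta^p(uav)$; (W2) $d^p(a,b)+\alpha^p(uav)\ge\alpha^p(ubv)$; (W3) $\beta^p(uv)+\beta^p(x)\ge\beta^p(uxv)$; (W4) $\alpha^p(uv)+\alpha^p(x)\ge\alpha^p(uxv)$; (W5) $\beta^p(uxv)+\alpha^p(x)\ge\beta^p(uv)$; (W6) $\alpha^p(uxv)+\beta^p(x)\ge\alpha^p(uv)$; (W7) $\alpha^p(ux)+\beta^p(xv)\ge\alpha^p(u)+\beta^p(v)$; (W8) $\beta^p(ux)+\alpha^p(xv)\ge\beta^p(u)+\alpha^p(v)$, where $\alpha(e)=\beta(e)=0$ by convention. Then $D$ is a separating quasi-metric on $\Sigma^*$.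
   Context: $\Sigma^*$ is the free monoid on $\Sigma$ (finite words, concatenation, empty word $e$), $\Sigma^+=\Sigma^*\setminus\{e\}$; for $w=w_1\cdots w_n$, $|w|=n$, $\bar w_k=w_1\cdots w_k$, $\bar w_0=e$. A quasi-metric on $X$ is a map $q:X\times X\to\mathbb{R}_{\ge0}$ with $q(x,y)=q(y,x)=0\iff x=y$ and $q(x,z)\le q(x,y)+q(y,z)$; it is separating if $q(x,y)=0$ implies $x=y$. A gap penalty over $\Sigma^+$ is a positive function $\gamma:\Sigma^+\to\mathbb{R}$ with $\gamma(u)+\gamma(v)\ge\gamma(uv)$ for all $u,v\in\Sigma^+$; $\Gamma(\Sigma)$ is the set of these. $\ell^p$ edit distance extending $d$, $\alpha$, $\beta$: for $x,y\in\Sigma^*$, $m=|x|$, $n=|y|$, $D(e,e)=0$, $D(e,\bar y_j)=\alpha(\bar y_j)$ ($1\le j\le n$), $D(\bar x_i,e)=\beta(\bar x_i)$ ($1\le i\le m$), and for $1\le i\le m$, $1\le j\le n$, \[D(\bar x_i,\bar y_j)=\Big(\min\Big\{D^p(\bar x_{i-1},\bar y_{j-1})+d^p(x_i,y_j),\ \min_{1\le k\le j}\{D^p(\bar x_i,\bar y_{j-k})+\alpha^p(y_{j-k+1}\cdots y_j)\},\ \min_{1\le k\le i}\{D^p(\bar x_{i-k},\bar y_j)+\beta^p(x_{i-k+1}\cdots x_i)\}\Big\}\Big)^{1/p},\] with $D(x,y)=D(\bar x_m,\bar y_n)$. *)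

(* Defs.v *)
From Stdlib Require Import Reals List.
Import ListNotations.
Open Scope R_scope.
Set Implicit Arguments.

(* Real power x^p for x >= 0 (x^p := 0 for x <= 0; only used with p >= 1). *)
Definition rpow (x p : R) : R := if Rlt_dec 0 x then Rpower x p else 0.

Definition quasi_metric (X : Type) (q : X -> X -> R) : Prop :=
  (forall x y, 0 <= q x y) /\
  (forall x y, (q x y = 0 /\ q y x = 0) <-> x = y) /\
  (forall x y z, q x z <= q x y + q y z).

Definition separating (X : Type) (q : X -> X -> R) : Prop :=
  forall x y, q x y = 0 -> x = y.

Definition gap_penalty (S : Type) (g : list S -> R) : Prop :=
  (forall w, w <> [] -> 0 < g w) /\
  (forall u v, u <> [] -> v <> [] -> g (u ++ v) <= g u + g v).

Definition ext0 (S : Type) (f : list S -> R) (w : list S) : R :=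
  match w with [] => 0 | _ => f w end.

Section EditDistance.
Variables (A : Type) (d : A -> A -> R) (alpha beta : list A -> R) (p : R).

Let pw (z : R) := rpow z p.

(* EDp fuel u v = D^p(u, v), computed by the recursion of the paper, where
   u = xbar_i, v = ybar_j are the current prefixes; fuel >= |u|+|v|+1. *)
Fixpoint EDp (fuel : nat) (u v : list A) : R :=
  match fuel with
  | O => 0
  | S f =>
    match rev u, rev v with
    | [], [] => 0
    | [], _ => pw (alpha v)
    | _, [] => pw (beta u)
    | a :: ru, b :: rv =>
      fold_right Rmin (EDp f (rev ru) (rev rv) + pw (d a b))
        (map (fun k => EDp f u (firstn (length v - k) v)
                        + pw (alpha (skipn (length v - k) v)))
             (seq 1 (length v))
         ++ map (fun k => EDp f (firstn (length u - k) u) v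
                        + pw (beta (skipn (length u - k) u)))
             (seq 1 (length u)))
    end
  end.

Definition edit_dist (x y : list A) : R :=
  rpow (EDp (S (length x + length y)) x y) (1 / p).

End EditDistance.

(* Main.v *)
Require Import Defs.
From Stdlib Require Import Reals List Lra Psatz Lia.
Import ListNotations.
Open Scope R_scope.

Lemma rpow_nonneg x y : 0 <= rpow x y.
Proof. unfold rpow; destruct (Rlt_dec 0 x). unfold Rpower; left; apply exp_pos. lra. Qed.

Lemma rpow_pos_eq x y : 0 < x -> rpow x y = Rpower x y.
Proof. intros H; unfold rpow; destruct (Rlt_dec 0 x); [reflexivity|lra]. Qed.

Lemma rpow_le0 x y : x <= 0 -> rpow x y = 0.
Proof. intros H; unfold rpow; destruct (Rlt_dec 0 x); [lra|reflexivity]. Qed.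

Lemma rpow_pos x y : 0 < x -> 0 < rpow x y.
Proof. intros H; rewrite rpow_pos_eq by lra; unfold Rpower; apply exp_pos. Qed.

Lemma rpow_mono e x y : 0 < e -> 0 <= x <= y -> rpow x e <= rpow y e.
Proof.
  intros He [H1 H2]. destruct (Req_dec x 0) as [->|Hx].
  - rewrite rpow_le0 by lra; apply rpow_nonneg.
  - rewrite !rpow_pos_eq by lra. apply Rle_Rpower_l; lra.
Qed.

Lemma rpow_zero_inv x e : 0 <= x -> rpow x e = 0 -> x = 0.
Proof.
  intros H1 H2. destruct (Req_dec x 0); auto. assert (0 < rpow x e) by (apply rpow_pos; lra). lra.
Qed.

Lemma rpow_inv e x : 0 < e -> 0 <= x -> rpow (rpow x e) (/ e) = x.
Proof.
  intros He Hx. destruct (Req_dec x 0) as [->|Hx0].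
  - rewrite (rpow_le0 0) by lra. apply rpow_le0; lra.
  - assert (0 < x) by lra. rewrite (rpow_pos_eq x) by lra.
    rewrite rpow_pos_eq by (unfold Rpower; apply exp_pos).
    rewrite Rpower_mult. replace (e * / e) with 1 by (field; lra). apply Rpower_1; lra.
Qed.

Lemma rpow_mul e x y : 0 <= x -> 0 <= y -> rpow (x * y) e = rpow x e * rpow y e.
Proof.
  intros Hx Hy. destruct (Req_dec x 0) as [->|Hx0].
  { rewrite Rmult_0_l, !(rpow_le0 0) by lra. ring. }
  destruct (Req_dec y 0) as [->|Hy0].
  { rewrite Rmult_0_r, !(rpow_le0 0) by lra. ring. }
  rewrite !rpow_pos_eq by nra. rewrite Rpower_mult_distr; auto; lra.
Qed.

Lemma rpow_1 e : rpow 1 e = 1.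
Proof. rewrite rpow_pos_eq by lra. unfold Rpower. rewrite ln_1, Rmult_0_r. apply exp_0. Qed.

Lemma rpow_Rinv e x : 0 < x -> rpow (/ x) e = / rpow x e.
Proof.
  intros Hx. rewrite !rpow_pos_eq by (try apply Rinv_0_lt_compat; lra).
  unfold Rpower. rewrite ln_Rinv by lra. replace (e * - ln x) with (- (e * ln x)) by ring.
  apply exp_Ropp.
Qed.

Lemma Rdiv_le_0_compat a b : 0 <= a -> 0 < b -> 0 <= a / b.
Proof. intros; unfold Rdiv; apply Rmult_le_pos; [lra| left; apply Rinv_0_lt_compat; lra]. Qed.

Lemma ln_le_sub1 x : 0 < x -> ln x <= x - 1.
Proof. intros H. pose proof (exp_ineq1_le (ln x)). rewrite exp_ln in H0 by lra. lra. Qed.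

Section P.
Variable p : R.
Hypothesis Hp : 1 <= p.

Definition q x := rpow x p.
Definition r x := rpow x (/ p).

Lemma q_nonneg x : 0 <= q x. Proof. apply rpow_nonneg. Qed.
Lemma r_nonneg x : 0 <= r x. Proof. apply rpow_nonneg. Qed.
Lemma q_mono x y : 0 <= x <= y -> q x <= q y.
Proof. intros; apply rpow_mono; lra. Qed.
Lemma r_mono x y : 0 <= x <= y -> r x <= r y.
Proof. intros; apply rpow_mono; auto. apply Rinv_0_lt_compat; lra. Qed.
Lemma rq x : 0 <= x -> r (q x) = x.
Proof. intros; apply rpow_inv; lra. Qed.
Lemma qr x : 0 <= x -> q (r x) = x.
Proof.
  intros. unfold q, r. rewrite <- (Rinv_inv p) at 2. apply rpow_inv; auto.
  apply Rinv_0_lt_compat; lra.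
Qed.
Lemma q_mul x y : 0 <= x -> 0 <= y -> q (x * y) = q x * q y.
Proof. intros; unfold q; apply rpow_mul; auto. Qed.
Lemma q0 : q 0 = 0. Proof. apply rpow_le0; lra. Qed.
Lemma r0 : r 0 = 0. Proof. apply rpow_le0; lra. Qed.

Lemma bernoulli t : 0 <= t -> 1 + p * (t - 1) <= q t.
Proof.
  intros Ht. destruct (Req_dec t 0) as [->|Ht0].
  { rewrite q0. lra. }
  assert (Htp : 0 < t) by lra.
  unfold q; rewrite rpow_pos_eq by lra.
  set (s := Rpower t p).
  assert (Hs : 0 < s) by (unfold s, Rpower; apply exp_pos).
  set (m := s / p + (1 - / p)).
  assert (Hip : 0 < / p <= 1) by (split; [apply Rinv_0_lt_compat; lra| rewrite <- Rinv_1; apply Rinv_le_contravar; lra]).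
  assert (Hm : 0 < m) by (unfold m; assert (0 < s / p) by (apply Rdiv_lt_0_compat; lra); lra).
  assert (H1 : ln (s / m) <= s / m - 1) by (apply ln_le_sub1; apply Rdiv_lt_0_compat; lra).
  assert (H2 : ln (/ m) <= / m - 1) by (apply ln_le_sub1; apply Rinv_0_lt_compat; lra).
  assert (Hl : ln t <= ln m).
  { assert (E1 : ln (s / m) = p * ln t - ln m).
    { unfold Rdiv. rewrite ln_mult, ln_Rinv by (try apply Rinv_0_lt_compat; lra).
      unfold s. rewrite ln_Rpower. ring. }
    assert (E2 : ln (/ m) = - ln m) by (apply ln_Rinv; lra).
    rewrite E1 in H1; rewrite E2 in H2.
    assert (Hsum : / p * (s / m - 1) + (1 - / p) * (/ m - 1) = 0).
    { unfold m in *. field. lra. }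
    assert (/ p * (p * ln t - ln m) + (1 - / p) * (- ln m) <= 0).
    { rewrite <- Hsum. apply Rplus_le_compat; apply Rmult_le_compat_l; lra. }
    assert (/ p * (p * ln t - ln m) + (1 - / p) * (- ln m) = ln t - ln m) by (field; lra).
    lra. }
  assert (t <= m).
  { destruct (Rle_dec t m); auto. exfalso. assert (ln m < ln t) by (apply ln_increasing; lra). lra. }
  unfold m in H. assert (p * t <= p * (s / p + (1 - / p))) by (apply Rmult_le_compat_l; lra).
  replace (p * (s / p + (1 - / p))) with (s + p - 1) in H0 by (field; lra). lra.
Qed.

Lemma q_convex l u v : 0 <= l <= 1 -> 0 <= u -> 0 <= v ->
  q (l * u + (1 - l) * v) <= l * q u + (1 - l) * q v.
Proof.
  intros Hl Hu Hv. set (m := l * u + (1 - l) * v).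
  assert (Hm0 : 0 <= m) by (unfold m; nra).
  pose proof (q_nonneg u); pose proof (q_nonneg v).
  destruct (Req_dec m 0) as [Hm|Hm].
  { rewrite Hm, q0. nra. }
  assert (Hmp : 0 < m) by lra.
  assert (Hu' : q u >= q m * (1 + p * (u / m - 1))).
  { replace u with (m * (u / m)) at 1 by (field; lra). rewrite q_mul by (lra || (apply Rdiv_le_0_compat; lra)).
    pose proof (bernoulli (u / m)). assert (0 <= u / m) by (apply Rdiv_le_0_compat; lra).
    pose proof (q_nonneg m). nra. }
  assert (Hv' : q v >= q m * (1 + p * (v / m - 1))).
  { replace v with (m * (v / m)) at 1 by (field; lra). rewrite q_mul by (lra || (apply Rdiv_le_0_compat; lra)).
    pose proof (bernoulli (v / m)). assert (0 <= v / m) by (apply Rdiv_le_0_compat; lra).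
    pose proof (q_nonneg m). nra. }
  assert (E : l * (u / m - 1) + (1 - l) * (v / m - 1) = 0) by (unfold m in *; field; lra).
  assert (l * q u + (1 - l) * q v >= l * (q m * (1 + p * (u / m - 1))) + (1 - l) * (q m * (1 + p * (v / m - 1)))) by nra.
  assert (l * (q m * (1 + p * (u / m - 1))) + (1 - l) * (q m * (1 + p * (v / m - 1))) = q m * (1 + p * (l * (u / m - 1) + (1 - l) * (v / m - 1)))) by ring.
  rewrite E in H2. lra.
Qed.

Lemma q_zero_inv x : 0 <= x -> q x = 0 -> x = 0.
Proof. intros; eapply rpow_zero_inv; eauto. Qed.

Lemma q_div x y : 0 <= x -> 0 < y -> q (x / y) = q x / q y.
Proof.
  intros. unfold Rdiv, q. rewrite rpow_mul by (lra || (left; apply Rinv_0_lt_compat; lra)).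
  rewrite rpow_Rinv by lra. reflexivity.
Qed.

Lemma minkowski2_q a b c e : 0 <= a -> 0 <= b -> 0 <= c -> 0 <= e ->
  q (a + b) + q (c + e) <= q (r (q a + q c) + r (q b + q e)).
Proof.
  intros Ha Hb Hc He.
  pose proof (q_nonneg a); pose proof (q_nonneg b); pose proof (q_nonneg c); pose proof (q_nonneg e).
  set (A := r (q a + q c)). set (B := r (q b + q e)).
  assert (HA : q A = q a + q c) by (apply qr; lra).
  assert (HB : q B = q b + q e) by (apply qr; lra).
  assert (A0 : 0 <= A) by apply r_nonneg. assert (B0 : 0 <= B) by apply r_nonneg.
  destruct (Req_dec A 0) as [EA|EA].
  { rewrite EA, q0 in HA. assert (q a = 0) by lra. assert (q c = 0) by lra.
    apply q_zero_inv in H3; auto. apply q_zero_inv in H4; auto. subst.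
    rewrite EA, !Rplus_0_l, HB. lra. }
  destruct (Req_dec B 0) as [EB|EB].
  { rewrite EB, q0 in HB. assert (q b = 0) by lra. assert (q e = 0) by lra.
    apply q_zero_inv in H3; auto. apply q_zero_inv in H4; auto. subst.
    rewrite EB, !Rplus_0_r, HA. lra. }
  assert (Ap : 0 < A) by lra. assert (Bp : 0 < B) by lra.
  set (l := A / (A + B)).
  assert (Hl : 0 <= l <= 1).
  { unfold l; split. apply Rdiv_le_0_compat; lra. apply Rmult_le_reg_r with (A + B); try lra.
    unfold Rdiv; rewrite Rmult_assoc, Rinv_l by lra. lra. }
  assert (Hqab : forall x y, 0 <= x -> 0 <= y ->
     q (x + y) <= q (A + B) * (l * (q x / q A) + (1 - l) * (q y / q B))).
  { intros x y Hx Hy.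
    replace (x + y) with ((A + B) * (l * (x / A) + (1 - l) * (y / B))) by (unfold l; field; lra).
    rewrite q_mul.
    2: lra. 2: { assert (0 <= x / A) by (apply Rdiv_le_0_compat; lra).
                 assert (0 <= y / B) by (apply Rdiv_le_0_compat; lra). nra. }
    rewrite <- !q_div by lra.
    apply Rmult_le_compat_l. apply q_nonneg.
    apply q_convex; auto; apply Rdiv_le_0_compat; lra. }
  pose proof (Hqab a b Ha Hb). pose proof (Hqab c e Hc He).
  assert (0 < q A) by (unfold q; apply rpow_pos; lra).
  assert (0 < q B) by (unfold q; apply rpow_pos; lra).
  assert (E : q (A + B) * (l * (q a / q A) + (1 - l) * (q b / q B)) +
              q (A + B) * (l * (q c / q A) + (1 - l) * (q e / q B)) = q (A + B)).
  { replace (q (A + B) * (l * (q a / q A) + (1 - l) * (q b / q B)) +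
              q (A + B) * (l * (q c / q A) + (1 - l) * (q e / q B))) with
      (q (A + B) * (l * ((q a + q c) / q A) + (1 - l) * ((q b + q e) / q B))) by (field; lra).
    rewrite <- HA, <- HB. field; lra. }
  lra.
Qed.

Lemma minkowski2 a b c e : 0 <= a -> 0 <= b -> 0 <= c -> 0 <= e ->
  r (q (a + b) + q (c + e)) <= r (q a + q c) + r (q b + q e).
Proof.
  intros. rewrite <- (rq (r (q a + q c) + r (q b + q e))).
  apply r_mono. split. pose proof (q_nonneg (a+b)); pose proof (q_nonneg (c+e)); lra.
  apply minkowski2_q; auto.
  pose proof (r_nonneg (q a + q c)); pose proof (r_nonneg (q b + q e)); lra.
Qed.

Lemma r_subadd P Q : 0 <= P -> 0 <= Q -> r (P + Q) <= r P + r Q.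
Proof.
  intros. pose proof (minkowski2 (r P) 0 0 (r Q) (r_nonneg _) (Rle_refl _) (Rle_refl _) (r_nonneg _)).
  replace (r P + 0) with (r P) in H1 by ring. replace (0 + r Q) with (r Q) in H1 by ring.
  rewrite q0, qr, qr in H1 by auto. rewrite !Rplus_0_r, !Rplus_0_l in H1.
  exact H1.
Qed.

Lemma keyK' S X Y e a b : 0 <= S -> 0 <= X -> 0 <= Y -> 0 <= e -> 0 <= a -> 0 <= b ->
  r S <= r X + r Y -> e <= a + b -> r (S + q e) <= r (X + q a) + r (Y + q b).
Proof.
  intros HS HX HY He Ha Hb H1 H2.
  pose proof (r_nonneg X); pose proof (r_nonneg Y).
  assert (S <= q (r X + r Y)) by (rewrite <- (qr S) by auto; apply q_mono; split; auto; apply r_nonneg).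
  assert (q e <= q (a + b)) by (apply q_mono; lra).
  pose proof (minkowski2 (r X) (r Y) a b H H0 Ha Hb) as M.
  rewrite !qr in M by auto.
  eapply Rle_trans; [|exact M].
  apply r_mono. split. pose proof (q_nonneg e); lra. lra.
Qed.

Lemma keyK S X Y E P Q : 0 <= S -> 0 <= X -> 0 <= Y -> 0 <= E -> 0 <= P -> 0 <= Q ->
  r S <= r X + r Y -> E <= P + Q -> r (S + E) <= r (X + P) + r (Y + Q).
Proof.
  intros. rewrite <- (qr E), <- (qr P), <- (qr Q) by auto.
  apply keyK'; auto; try apply r_nonneg.
  eapply Rle_trans; [apply r_mono; split; [auto| exact H6]|]. apply r_subadd; auto.
Qed.

End P.

Section Comb.
Variable Sigma : Type.
Variable d : Sigma -> Sigma -> R.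
Variables alpha beta : list Sigma -> R.
Variable p : R.
Hypothesis Hp : 1 <= p.

Inductive op := Sub (a b : Sigma) | Ins (a : Sigma) (w : list Sigma) | Del (a : Sigma) (w : list Sigma).
Definition src o := match o with Sub a _ => [a] | Ins _ _ => [] | Del a w => a :: w end.
Definition tgt o := match o with Sub _ b => [b] | Ins a w => a :: w | Del _ _ => [] end.
Definition Ap w := rpow (ext0 alpha w) p.
Definition Bp w := rpow (ext0 beta w) p.
Definition cost o := match o with Sub a b => rpow (d a b) p | Ins a w => Ap (a :: w) | Del a w => Bp (a :: w) end.
Definition srcs A := flat_map src A.
Definition tgts A := flat_map tgt A.
Fixpoint C (A : list op) : R := match A with [] => 0 | o :: A' => cost o + C A' end.

Lemma srcs_app A B : srcs (A ++ B) = srcs A ++ srcs B. Proof. apply flat_map_app. Qed.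
Lemma tgts_app A B : tgts (A ++ B) = tgts A ++ tgts B. Proof. apply flat_map_app. Qed.
Lemma C_app A B : C (A ++ B) = C A + C B.
Proof. induction A; simpl; [ring| rewrite IHA; ring]. Qed.
Lemma cost_nonneg o : 0 <= cost o. Proof. destruct o; apply rpow_nonneg. Qed.
Lemma C_nonneg A : 0 <= C A.
Proof. induction A; simpl; [lra| pose proof (cost_nonneg a); lra]. Qed.
Lemma Ap_nil : Ap [] = 0. Proof. apply rpow_le0; simpl; lra. Qed.
Lemma Bp_nil : Bp [] = 0. Proof. apply rpow_le0; simpl; lra. Qed.
Lemma Ap_nonneg w : 0 <= Ap w. Proof. apply rpow_nonneg. Qed.
Lemma Bp_nonneg w : 0 <= Bp w. Proof. apply rpow_nonneg. Qed.

Definition delops w := match w with [] => [] | a :: w' => [Del a w'] end.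
Definition insops w := match w with [] => [] | a :: w' => [Ins a w'] end.
Lemma delops_srcs w : srcs (delops w) = w. Proof. destruct w; simpl; auto. rewrite app_nil_r; auto. Qed.
Lemma delops_tgts w : tgts (delops w) = []. Proof. destruct w; simpl; auto. Qed.
Lemma delops_C w : C (delops w) = Bp w. Proof. destruct w; simpl. rewrite Bp_nil; auto. ring. Qed.
Lemma insops_srcs w : srcs (insops w) = []. Proof. destruct w; simpl; auto. Qed.
Lemma insops_tgts w : tgts (insops w) = w. Proof. destruct w; simpl; auto. rewrite app_nil_r; auto. Qed.
Lemma insops_C w : C (insops w) = Ap w. Proof. destruct w; simpl. rewrite Ap_nil; auto. ring. Qed.

Definition Good x z X Y := 0 <= X /\ 0 <= Y /\
  exists A, srcs A = x /\ tgts A = z /\ r p (C A) <= r p X + r p Y.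

Lemma good_mono x z X Y X' Y' : Good x z X Y -> X <= X' -> Y <= Y' -> Good x z X' Y'.
Proof.
  intros [HX [HY [A [H1 [H2 H3]]]]] h1 h2. split; [lra|split; [lra|]].
  exists A; repeat split; auto. pose proof (r_mono p Hp X X'); pose proof (r_mono p Hp Y Y'). lra.
Qed.

Lemma good_del x z X Y w P Q : Good x z X Y -> 0 <= P -> 0 <= Q -> Bp w <= P + Q ->
  Good (x ++ w) z (X + P) (Y + Q).
Proof.
  intros [HX [HY [A [H1 [H2 H3]]]]] hP hQ hE. split; [lra|split; [lra|]].
  exists (A ++ delops w). rewrite srcs_app, tgts_app, delops_srcs, delops_tgts, app_nil_r, C_app, delops_C.
  repeat split; auto; try congruence.
  apply keyK; auto using C_nonneg, Bp_nonneg.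
Qed.

Lemma good_ins x z X Y w P Q : Good x z X Y -> 0 <= P -> 0 <= Q -> Ap w <= P + Q ->
  Good x (z ++ w) (X + P) (Y + Q).
Proof.
  intros [HX [HY [A [H1 [H2 H3]]]]] hP hQ hE. split; [lra|split; [lra|]].
  exists (A ++ insops w). rewrite srcs_app, tgts_app, insops_srcs, insops_tgts, app_nil_r, C_app, insops_C.
  repeat split; auto; try congruence.
  apply keyK; auto using C_nonneg, Ap_nonneg.
Qed.

Lemma good_sub x z X Y a c u v : Good x z X Y -> 0 <= u -> 0 <= v -> 0 <= d a c -> d a c <= u + v ->
  Good (x ++ [a]) (z ++ [c]) (X + q p u) (Y + q p v).
Proof.
  intros [HX [HY [A [H1 [H2 H3]]]]] hu hv h0 hE.
  pose proof (q_nonneg p u); pose proof (q_nonneg p v).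
  split; [lra|split; [lra|]].
  exists (A ++ [Sub a c]). rewrite srcs_app, tgts_app, C_app. simpl.
  repeat split; try congruence.
  rewrite Rplus_0_r. apply keyK'; auto using C_nonneg.
Qed.

Record cop := mkc { co : op; cP : R; cQ : R }.
Definition ops (L : list cop) := map co L.
Fixpoint PP (L : list cop) : R := match L with [] => 0 | x :: L' => cP x + PP L' end.
Fixpoint QQ (L : list cop) : R := match L with [] => 0 | x :: L' => cQ x + QQ L' end.
Lemma PP_app L M : PP (L ++ M) = PP L + PP M. Proof. induction L; simpl; [ring|rewrite IHL; ring]. Qed.
Lemma QQ_app L M : QQ (L ++ M) = QQ L + QQ M. Proof. induction L; simpl; [ring|rewrite IHL; ring]. Qed.
Lemma ops_app L M : ops (L ++ M) = ops L ++ ops M. Proof. apply map_app. Qed.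

Definition valid x := 0 <= cP x /\ 0 <= cQ x /\ cost (co x) <= cP x + cQ x.
Definition lvalid x := valid x /\ forall a b, co x = Sub a b -> cost (co x) <= cP x.
Definition rvalid x := valid x /\ forall a b, co x = Sub a b -> cost (co x) <= cQ x.

Lemma PP_nonneg L : Forall valid L -> 0 <= PP L.
Proof. induction 1; simpl. lra. destruct H; lra. Qed.
Lemma QQ_nonneg L : Forall valid L -> 0 <= QQ L.
Proof. induction 1; simpl. lra. destruct H as [? [? ?]]; lra. Qed.
Lemma C_le_PQ L : Forall valid L -> C (ops L) <= PP L + QQ L.
Proof. induction 1; simpl. lra. destruct H as [? [? ?]]; lra. Qed.

Lemma good_single L : Forall valid L -> Good (srcs (ops L)) (tgts (ops L)) (PP L) (QQ L).
Proof.
  intros H. pose proof (PP_nonneg L H); pose proof (QQ_nonneg L H).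
  split; auto; split; auto. exists (ops L); repeat split; auto.
  eapply Rle_trans; [apply r_mono; auto; split; [apply C_nonneg| apply C_le_PQ; auto]|].
  apply r_subadd; auto.
Qed.

Hypothesis W1 : forall (a b : Sigma) (u v : list Sigma),
        rpow (d a b) p + rpow (ext0 beta (u ++ b :: v)) p
        >= rpow (ext0 beta (u ++ a :: v)) p.
Hypothesis W2 : forall (a b : Sigma) (u v : list Sigma),
        rpow (d a b) p + rpow (ext0 alpha (u ++ a :: v)) p
        >= rpow (ext0 alpha (u ++ b :: v)) p.
Hypothesis W3 : forall u v x : list Sigma,
        rpow (ext0 beta (u ++ v)) p + rpow (ext0 beta x) p
        >= rpow (ext0 beta (u ++ x ++ v)) p.
Hypothesis W4 : forall u v x : list Sigma,
        rpow (ext0 alpha (u ++ v)) p + rpow (ext0 alpha x) p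
        >= rpow (ext0 alpha (u ++ x ++ v)) p.
Hypothesis W5 : forall u v x : list Sigma,
        rpow (ext0 beta (u ++ x ++ v)) p + rpow (ext0 alpha x) p
        >= rpow (ext0 beta (u ++ v)) p.
Hypothesis W6 : forall u v x : list Sigma,
        rpow (ext0 alpha (u ++ x ++ v)) p + rpow (ext0 beta x) p
        >= rpow (ext0 alpha (u ++ v)) p.
Hypothesis W7 : forall u v x : list Sigma,
        rpow (ext0 alpha (u ++ x)) p + rpow (ext0 beta (x ++ v)) p
        >= rpow (ext0 alpha u) p + rpow (ext0 beta v) p.
Hypothesis W8 : forall u v x : list Sigma,
        rpow (ext0 beta (u ++ x)) p + rpow (ext0 alpha (x ++ v)) p
        >= rpow (ext0 beta u) p + rpow (ext0 alpha v) p.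

Lemma del_merge R : forall u v, Bp (u ++ srcs R ++ v) <= C R + Bp (u ++ tgts R ++ v).
Proof.
  induction R as [|o R IH]; intros u v; simpl. lra.
  destruct o as [a b|a w|a w]; simpl.
  - specialize (IH (u ++ [b]) v).
    pose proof (W1 a b u (srcs R ++ v)).
    rewrite <- ?app_assoc in *; cbn [app] in *. unfold Bp, Ap in *. lra.
  - specialize (IH (u ++ a :: w) v).
    pose proof (W5 u (srcs R ++ v) (a :: w)).
    rewrite <- ?app_assoc in *; cbn [app] in *. unfold Bp, Ap in *. lra.
  - specialize (IH u v).
    pose proof (W3 u (srcs R ++ v) (a :: w)).
    rewrite <- ?app_assoc in *; cbn [app] in *. unfold Bp, Ap in *. lra.
Qed.

Lemma ins_merge R : forall u v, Ap (u ++ tgts R ++ v) <= C R + Ap (u ++ srcs R ++ v).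
Proof.
  induction R as [|o R IH]; intros u v; simpl. lra.
  destruct o as [a b|a w|a w]; simpl.
  - specialize (IH (u ++ [a]) v).
    pose proof (W2 a b u (tgts R ++ v)).
    rewrite <- ?app_assoc in *; cbn [app] in *. unfold Bp, Ap in *. lra.
  - specialize (IH u v).
    pose proof (W4 u (tgts R ++ v) (a :: w)).
    rewrite <- ?app_assoc in *; cbn [app] in *. unfold Bp, Ap in *. lra.
  - specialize (IH (u ++ a :: w) v).
    pose proof (W6 u (tgts R ++ v) (a :: w)).
    rewrite <- ?app_assoc in *; cbn [app] in *. unfold Bp, Ap in *. lra.
Qed.

Lemma split_tgt L : forall y1 y2, tgts (ops L) = y1 ++ y2 ->
  (exists L1 L2, L = L1 ++ L2 /\ tgts (ops L1) = y1 /\ tgts (ops L2) = y2) \/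
  (exists L1 c w0 P Q L2 t1 t2, L = L1 ++ mkc (Ins c w0) P Q :: L2 /\ c :: w0 = t1 ++ t2 /\
     t1 <> [] /\ t2 <> [] /\ tgts (ops L1) ++ t1 = y1 /\ t2 ++ tgts (ops L2) = y2).
Proof.
  induction L as [|x L IH]; intros y1 y2 H.
  - left. exists [], []. simpl in *. symmetry in H. apply app_eq_nil in H. destruct H; subst; auto.
  - simpl in H. destruct (app_eq_app _ _ _ _ H) as [l [[E1 E2]|[E1 E2]]].
    +
      destruct l as [|c l].
      { left. exists [x], L. rewrite app_nil_r in E1. simpl. rewrite app_nil_r. subst; auto. }
      destruct y1 as [|c1 y1'].
      { left. exists [], (x :: L). simpl in *. subst. auto. }
      right. destruct x as [[a b|a w|a w] P Q]; simpl in E1.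
      * inversion E1. destruct y1'; discriminate.
      * exists [], a, w, P, Q, L, (c1 :: y1'), (c :: l). simpl. subst y2. repeat split; try discriminate; try congruence.
      * discriminate.
    +
      destruct (IH l y2 E2) as [[L1 [L2 [h1 [h2 h3]]]]|[L1 [c [w0 [P [Q [L2 [t1 [t2 [h1 [h2 [h3 [h4 [h5 h6]]]]]]]]]]]]]].
      * left. exists (x :: L1), L2. subst. simpl. auto.
      * right. exists (x :: L1), c, w0, P, Q, L2, t1, t2. subst. simpl. rewrite <- app_assoc.
        repeat split; auto.
Qed.

Lemma split_src L : forall y1 y2, srcs (ops L) = y1 ++ y2 ->
  (exists L1 L2, L = L1 ++ L2 /\ srcs (ops L1) = y1 /\ srcs (ops L2) = y2) \/
  (exists L1 c w0 P Q L2 t1 t2, L = L1 ++ mkc (Del c w0) P Q :: L2 /\ c :: w0 = t1 ++ t2 /\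
     t1 <> [] /\ t2 <> [] /\ srcs (ops L1) ++ t1 = y1 /\ t2 ++ srcs (ops L2) = y2).
Proof.
  induction L as [|x L IH]; intros y1 y2 H.
  - left. exists [], []. simpl in *. symmetry in H. apply app_eq_nil in H. destruct H; subst; auto.
  - simpl in H. destruct (app_eq_app _ _ _ _ H) as [l [[E1 E2]|[E1 E2]]].
    + destruct l as [|c l].
      { left. exists [x], L. rewrite app_nil_r in E1. simpl. rewrite app_nil_r. subst; auto. }
      destruct y1 as [|c1 y1'].
      { left. exists [], (x :: L). simpl in *. subst. auto. }
      right. destruct x as [[a b|a w|a w] P Q]; simpl in E1.
      * inversion E1. destruct y1'; discriminate.
      * discriminate.
      * exists [], a, w, P, Q, L, (c1 :: y1'), (c :: l). simpl. subst y2. repeat split; try discriminate; try congruence.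
    + destruct (IH l y2 E2) as [[L1 [L2 [h1 [h2 h3]]]]|[L1 [c [w0 [P [Q [L2 [t1 [t2 [h1 [h2 [h3 [h4 [h5 h6]]]]]]]]]]]]]].
      * left. exists (x :: L1), L2. subst. simpl. auto.
      * right. exists (x :: L1), c, w0, P, Q, L2, t1, t2. subst. simpl. rewrite <- app_assoc.
        repeat split; auto.
Qed.

Hypothesis Dtri : forall x y z, d x z <= d x y + d y z.
Hypothesis Dnn : forall x y, 0 <= d x y.

Lemma split_budget a e P Q : 0 <= a -> 0 <= e -> 0 <= P -> 0 <= Q -> a + e <= P + Q ->
  exists P1 Q1 P2 Q2, 0 <= P1 /\ 0 <= Q1 /\ 0 <= P2 /\ 0 <= Q2 /\ a <= P1 + Q1 /\ e <= P2 + Q2 /\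
    P1 + P2 <= P /\ Q1 + Q2 <= Q.
Proof.
  intros. destruct (Req_dec (P + Q) 0) as [E|E].
  { exists 0, 0, 0, 0. lra. }
  set (t := a / (P + Q)).
  assert (Ht : 0 <= t <= 1).
  { unfold t; split. apply Rdiv_le_0_compat; lra.
    apply Rmult_le_reg_r with (P + Q); [lra|]. unfold Rdiv. rewrite Rmult_assoc, Rinv_l by lra. lra. }
  assert (Ha : a = t * (P + Q)) by (unfold t; field; lra).
  exists (t * P), (t * Q), (P - t * P), (Q - t * Q). repeat split; nra.
Qed.

Lemma last_case {T} (L : list T) : L = [] \/ exists L' x, L = L' ++ [x].
Proof.
  induction L using rev_ind. auto. right. exists L, x. auto.
Qed.

Lemma lvalid_valid L : Forall lvalid L -> Forall valid L.
Proof. apply Forall_impl. intros a [h _]; auto. Qed.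
Lemma rvalid_valid L : Forall rvalid L -> Forall valid L.
Proof. apply Forall_impl. intros a [h _]; auto. Qed.

Definition IHP n := forall L1 L2, (length L1 + length L2 < n)%nat -> Forall lvalid L1 -> Forall rvalid L2 ->
  tgts (ops L1) = srcs (ops L2) ->
  Good (srcs (ops L1)) (tgts (ops L2)) (PP L1 + PP L2) (QQ L1 + QQ L2).

Ltac norm := rewrite ?ops_app, ?srcs_app, ?tgts_app, ?PP_app, ?QQ_app in *; cbn [ops map srcs tgts flat_map src tgt co cP cQ PP QQ app] in *; rewrite ?app_nil_r in *.

Lemma Forall_app_inv {T} (P : T -> Prop) L M : Forall P (L ++ M) -> Forall P L /\ Forall P M.
Proof. intros H; apply Forall_app in H; auto. Qed.

Lemma case_del n L1 B2 c w P2 Q2 : IHP n -> (length L1 + S (length B2) <= n)%nat ->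
  Forall lvalid L1 -> Forall rvalid (B2 ++ [mkc (Del c w) P2 Q2]) ->
  tgts (ops L1) = srcs (ops B2) ++ c :: w ->
  Good (srcs (ops L1)) (tgts (ops B2)) (PP L1 + (PP B2 + (P2 + 0))) (QQ L1 + (QQ B2 + (Q2 + 0))).
Proof.
  intros IH Hn HV1 HV2 Ht.
  apply Forall_app_inv in HV2. destruct HV2 as [HB2 Hx]. inversion Hx as [|? ? [[hP [hQ hc]] _] _]; subst. cbn [cost co cP cQ] in hP, hQ, hc.
  pose proof (lvalid_valid _ HV1) as V1. pose proof (rvalid_valid _ HB2) as VB2.
  destruct (split_tgt L1 _ _ Ht) as [[M1 [M2 [E [h1 h2]]]]|[M1 [c' [w0 [P' [Q' [M2 [t1 [t2 [E [h1 [h2 [h3 [h4 h5]]]]]]]]]]]]]]; subst L1.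
  - apply Forall_app_inv in HV1; destruct HV1 as [HM1 HM2].
    pose proof (lvalid_valid _ HM2) as VM2.
    assert (G := IH M1 B2). rewrite length_app in Hn.
    specialize (G ltac:(lia) HM1 HB2 h1).
    pose proof (del_merge (ops M2) [] []). rewrite !app_nil_r in H. simpl in H. rewrite h2 in H.
    pose proof (C_le_PQ M2 VM2). pose proof (PP_nonneg _ VM2). pose proof (QQ_nonneg _ VM2).
    norm. eapply good_mono. apply (good_del _ _ _ _ (srcs (ops M2)) (PP M2 + P2) (QQ M2 + Q2) G); try lra.
    + lra.
    + lra.
  - apply Forall_app_inv in HV1; destruct HV1 as [HM1 HM2']. inversion HM2' as [|? ? [[hP' [hQ' hc']] _] HM2]; subst.
    cbn [cost co cP cQ] in hP', hQ', hc'. pose proof (lvalid_valid _ HM2) as VM2.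
    destruct t1 as [|c1 t1']; [congruence|].
    pose proof (del_merge (ops M2) t2 []). rewrite !app_nil_r in H. rewrite h5 in H.
    pose proof (W7 (c1 :: t1') (srcs (ops M2)) t2). rewrite <- h1 in H0.
    pose proof (C_le_PQ M2 VM2). pose proof (PP_nonneg _ VM2). pose proof (QQ_nonneg _ VM2).
    assert (Hineq : Ap (c1 :: t1') + Bp (srcs (ops M2)) <= (P' + PP M2 + P2) + (Q' + QQ M2 + Q2)).
    { unfold Ap, Bp in *. lra. }
    destruct (split_budget _ _ (P' + PP M2 + P2) (Q' + QQ M2 + Q2) (Ap_nonneg _) (Bp_nonneg _) ltac:(lra) ltac:(lra) Hineq)
      as [P1 [Q1 [P3 [Q3 [? [? [? [? [? [? [? ?]]]]]]]]]]].
    assert (G := IH (M1 ++ [mkc (Ins c1 t1') P1 Q1]) B2).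
    rewrite !length_app in Hn, G. simpl in Hn, G.
    assert (HV : Forall lvalid (M1 ++ [mkc (Ins c1 t1') P1 Q1])).
    { apply Forall_app; split; auto. constructor; [|constructor]. split. split; simpl; auto. intros a b Hab; discriminate. }
    specialize (G ltac:(lia) HV HB2). norm. specialize (G h4).
    eapply good_mono. apply (good_del _ _ _ _ (srcs (ops M2)) P3 Q3 G); auto.
    + lra.
    + lra.
Qed.

Lemma case_ins n B1 L2 c w P1 Q1 : IHP n -> (S (length B1) + length L2 <= n)%nat ->
  Forall lvalid (B1 ++ [mkc (Ins c w) P1 Q1]) -> Forall rvalid L2 ->
  tgts (ops B1) ++ c :: w = srcs (ops L2) ->
  Good (srcs (ops B1)) (tgts (ops L2)) ((PP B1 + (P1 + 0)) + PP L2) ((QQ B1 + (Q1 + 0)) + QQ L2).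
Proof.
  intros IH Hn HV1 HV2 Ht.
  apply Forall_app_inv in HV1. destruct HV1 as [HB1 Hx]. inversion Hx as [|? ? [[hP [hQ hc]] _] _]; subst. cbn [cost co cP cQ] in hP, hQ, hc.
  pose proof (rvalid_valid _ HV2) as V2. pose proof (lvalid_valid _ HB1) as VB1.
  destruct (split_src L2 _ _ (eq_sym Ht)) as [[M1 [M2 [E [h1 h2]]]]|[M1 [c' [w0 [P' [Q' [M2 [t1 [t2 [E [h1 [h2 [h3 [h4 h5]]]]]]]]]]]]]]; subst L2.
  - apply Forall_app_inv in HV2; destruct HV2 as [HM1 HM2].
    pose proof (rvalid_valid _ HM2) as VM2.
    assert (G := IH B1 M1). rewrite length_app in Hn.
    specialize (G ltac:(lia) HB1 HM1 (eq_sym h1)).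
    pose proof (ins_merge (ops M2) [] []). rewrite !app_nil_r in H. simpl in H. rewrite h2 in H.
    pose proof (C_le_PQ M2 VM2). pose proof (PP_nonneg _ VM2). pose proof (QQ_nonneg _ VM2).
    norm. eapply good_mono. apply (good_ins _ _ _ _ (tgts (ops M2)) (PP M2 + P1) (QQ M2 + Q1) G); try lra.
    + lra.
    + lra.
  - apply Forall_app_inv in HV2; destruct HV2 as [HM1 HM2']. inversion HM2' as [|? ? [[hP' [hQ' hc']] _] HM2]; subst.
    cbn [cost co cP cQ] in hP', hQ', hc'. pose proof (rvalid_valid _ HM2) as VM2.
    destruct t1 as [|c1 t1']; [congruence|].
    pose proof (ins_merge (ops M2) [] []). rewrite !app_nil_r in H. simpl in H.
    pose proof (W8 (c1 :: t1') (srcs (ops M2)) t2). rewrite <- h1, h5 in H0.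
    pose proof (C_le_PQ M2 VM2). pose proof (PP_nonneg _ VM2). pose proof (QQ_nonneg _ VM2).
    assert (Hineq : Bp (c1 :: t1') + Ap (tgts (ops M2)) <= (P' + PP M2 + P1) + (Q' + QQ M2 + Q1)).
    { unfold Ap, Bp in *. lra. }
    destruct (split_budget _ _ (P' + PP M2 + P1) (Q' + QQ M2 + Q1) (Bp_nonneg _) (Ap_nonneg _) ltac:(lra) ltac:(lra) Hineq)
      as [P3 [Q3 [P4 [Q4 [? [? [? [? [? [? [? ?]]]]]]]]]]].
    assert (G := IH B1 (M1 ++ [mkc (Del c1 t1') P3 Q3])).
    rewrite !length_app in Hn, G. simpl in Hn, G.
    assert (HV : Forall rvalid (M1 ++ [mkc (Del c1 t1') P3 Q3])).
    { apply Forall_app; split; auto. constructor; [|constructor]. split. split; simpl; auto. intros a b Hab; discriminate. }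
    specialize (G ltac:(lia) HB1 HV). norm. specialize (G (eq_sym h4)).
    eapply good_mono. apply (good_ins _ _ _ _ (tgts (ops M2)) P4 Q4 G); auto.
    + lra.
    + lra.
Qed.

Lemma main n : IHP n.
Proof.
  induction n as [|n IH]; intros L1 L2 Hn HV1 HV2 Ht; [lia|].
  destruct (last_case L1) as [->|[B1 [x1 ->]]].
  { simpl in *. rewrite Ht. pose proof (good_single L2 (rvalid_valid _ HV2)).
    eapply good_mono; [exact H| lra | lra]. }
  destruct (last_case L2) as [->|[B2 [x2 ->]]].
  { pose proof (good_single _ (lvalid_valid _ HV1)). rewrite Ht in H. simpl in H |- *.
    eapply good_mono; [exact H| lra | lra]. }
  rewrite !length_app in Hn. simpl in Hn.
  pose proof HV1 as HV1'. apply Forall_app_inv in HV1'. destruct HV1' as [HB1 Hx1].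
  pose proof HV2 as HV2'. apply Forall_app_inv in HV2'. destruct HV2' as [HB2 Hx2].
  destruct x1 as [o1 P1 Q1]. destruct x2 as [o2 P2 Q2].
  inversion Hx1 as [|? ? [[hP1 [hQ1 hc1]] hs1] _]; subst.
  inversion Hx2 as [|? ? [[hP2 [hQ2 hc2]] hs2] _]; subst.
  cbn [cost co cP cQ] in hP1, hQ1, hc1, hs1, hP2, hQ2, hc2, hs2.
  destruct o1 as [a b|c w|c w].
  - destruct o2 as [b' e|c w|c w].
    + norm. apply app_inj_tail in Ht. destruct Ht as [Ht Eb]. subst b'.
      assert (G := IH B1 B2 ltac:(lia) HB1 HB2 Ht).
      pose proof (hs1 a b eq_refl). pose proof (hs2 b e eq_refl).
      eapply good_mono. apply (good_sub _ _ _ _ a e (d a b) (d b e) G); auto.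
      * unfold q; cbn [cost] in *; lra.
      * unfold q; cbn [cost] in *; lra.
    + assert (G := IH (B1 ++ [mkc (Sub a b) P1 Q1]) B2).
      rewrite length_app in G. simpl in G. specialize (G ltac:(lia) HV1 HB2).
      norm. specialize (G Ht).
      eapply good_mono. apply (good_ins _ _ _ _ (c :: w) P2 Q2 G); auto.
      * lra.
      * lra.
    + assert (G := case_del n (B1 ++ [mkc (Sub a b) P1 Q1]) B2 c w P2 Q2 IH).
      rewrite length_app in G. simpl in G. specialize (G ltac:(lia) HV1 HV2).
      norm. specialize (G Ht). eapply good_mono; [exact G| lra | lra].
  - assert (G := case_ins n B1 (B2 ++ [mkc o2 P2 Q2]) c w P1 Q1 IH).
    rewrite length_app in G. simpl in G. specialize (G ltac:(lia) HV1 HV2).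
    norm. specialize (G Ht). eapply good_mono; [exact G| lra | lra].
  - assert (G := IH B1 (B2 ++ [mkc o2 P2 Q2])).
    rewrite length_app in G. simpl in G. specialize (G ltac:(lia) HB1 HV2).
    norm. specialize (G Ht).
    eapply good_mono. apply (good_del _ _ _ _ (c :: w) P1 Q1 G); auto.
    * lra.
    * lra.
Qed.

Notation ED := (EDp d alpha beta p).

Lemma EDp_S f u v : ED (S f) u v =
  match rev u with
  | [] => match rev v with [] => 0 | _ :: _ => rpow (alpha v) p end
  | a :: ru => match rev v with
     | [] => rpow (beta u) p
     | b :: rv => fold_right Rmin (ED f (rev ru) (rev rv) + rpow (d a b) p)
         (map (fun k => ED f u (firstn (length v - k) v) + rpow (alpha (skipn (length v - k) v)) p)
             (seq 1 (length v))
          ++ map (fun k => ED f (firstn (length u - k) u) v + rpow (beta (skipn (length u - k) u)) p)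
             (seq 1 (length u)))
     end
  end.
Proof. reflexivity. Qed.

Lemma fr_le_base b L : fold_right Rmin b L <= b.
Proof. induction L; simpl. lra. pose proof (Rmin_r a (fold_right Rmin b L)). lra. Qed.
Lemma fr_le_in b L z : In z L -> fold_right Rmin b L <= z.
Proof.
  induction L; simpl; [tauto|]. intros [->|H].
  apply Rmin_l. pose proof (Rmin_r a (fold_right Rmin b L)). pose proof (IHL H). lra.
Qed.
Lemma fr_cases b L : fold_right Rmin b L = b \/ In (fold_right Rmin b L) L.
Proof.
  induction L; simpl. auto.
  destruct (Rle_dec a (fold_right Rmin b L)).
  - rewrite Rmin_left by auto. right; left; auto.
  - rewrite Rmin_right by lra. destruct IHL as [E|E]; [left; auto| right; right; auto].
Qed.

Lemma firstn_len_app {T} (l1 l2 : list T) : firstn (length l1) (l1 ++ l2) = l1.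
Proof. induction l1; simpl; auto. f_equal; auto. Qed.
Lemma skipn_len_app {T} (l1 l2 : list T) : skipn (length l1) (l1 ++ l2) = l2.
Proof. induction l1; simpl; auto. Qed.

Lemma Ap_srcs_nil A : srcs A = [] -> Ap (tgts A) <= C A.
Proof. intros H. pose proof (ins_merge A [] []). rewrite !app_nil_r in H0. simpl in H0. rewrite H, Ap_nil in H0. lra. Qed.
Lemma Bp_tgts_nil A : tgts A = [] -> Bp (srcs A) <= C A.
Proof. intros H. pose proof (del_merge A [] []). rewrite !app_nil_r in H0. simpl in H0. rewrite H, Bp_nil in H0. lra. Qed.

Lemma ED_upper A : forall fuel, (length (srcs A) + length (tgts A) < fuel)%nat -> ED fuel (srcs A) (tgts A) <= C A.
Proof.
  induction A as [|o A IH] using rev_ind; intros fuel Hf.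
  - destruct fuel; [simpl in Hf; lia|]. reflexivity.
  - destruct fuel as [|f]; [lia|]. rewrite EDp_S.
    pose proof (C_nonneg (A ++ [o])) as HC0.
    destruct (rev (srcs (A ++ [o]))) as [|a ru] eqn:Ex.
    { assert (Hx : srcs (A ++ [o]) = []) by (rewrite <- (rev_involutive (srcs _)), Ex; auto).
      destruct (rev (tgts (A ++ [o]))) as [|b rv] eqn:Ey; [lra|].
      pose proof (Ap_srcs_nil _ Hx). destruct (tgts (A ++ [o])) eqn:Ey'; [discriminate|].
      unfold Ap in H. exact H. }
    destruct (rev (tgts (A ++ [o]))) as [|b rv] eqn:Ey.
    { assert (Hy : tgts (A ++ [o]) = []) by (rewrite <- (rev_involutive (tgts _)), Ey; auto).
      pose proof (Bp_tgts_nil _ Hy). destruct (srcs (A ++ [o])) eqn:Ex'; [discriminate|].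
      unfold Bp in H. exact H. }
    rewrite srcs_app, tgts_app, length_app, length_app in Hf. rewrite C_app. simpl C.
    destruct o as [a0 b0|c w|c w].
    +
      simpl in Ex, Ey, Hf. rewrite srcs_app in Ex. rewrite tgts_app in Ey. simpl in Ex, Ey.
      rewrite rev_app_distr in Ex, Ey. simpl in Ex, Ey. injection Ex as -> <-. injection Ey as -> <-.
      rewrite !rev_involutive. eapply Rle_trans; [apply fr_le_base|].
      pose proof (IH f ltac:(lia)). simpl. lra.
    +
      eapply Rle_trans; [apply fr_le_in, in_or_app; left; apply in_map_iff; exists (length (c :: w)); split; [reflexivity|] |].
      * apply in_seq. rewrite tgts_app, length_app. simpl. rewrite ?app_nil_r, ?length_app. simpl. lia.
      * rewrite srcs_app, tgts_app, length_app. simpl srcs. simpl tgt. rewrite app_nil_r.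
        simpl (tgts [Ins c w]). rewrite app_nil_r.
        replace (length (tgts A) + length (c :: w) - length (c :: w))%nat with (length (tgts A)) by lia.
        rewrite firstn_len_app, skipn_len_app.
        pose proof (IH f ltac:(simpl in Hf; lia)). simpl. unfold Ap. simpl ext0. lra.
    +
      eapply Rle_trans; [apply fr_le_in, in_or_app; right; apply in_map_iff; exists (length (c :: w)); split; [reflexivity|] |].
      * apply in_seq. rewrite srcs_app, length_app. simpl. rewrite ?app_nil_r, ?length_app. simpl. lia.
      * rewrite srcs_app, tgts_app, length_app. simpl tgts. rewrite app_nil_r.
        simpl (srcs [Del c w]). rewrite app_nil_r.
        replace (length (srcs A) + length (c :: w) - length (c :: w))%nat with (length (srcs A)) by lia.
        rewrite firstn_len_app, skipn_len_app.
        pose proof (IH f ltac:(simpl in Hf; lia)). simpl. unfold Bp. simpl ext0. lra.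
Qed.

Lemma rev_nil_inv {T} (l : list T) : rev l = [] -> l = [].
Proof. intros H. rewrite <- (rev_involutive l), H. auto. Qed.

Lemma ED_attain fuel : forall x y, (length x + length y < fuel)%nat ->
  exists A, srcs A = x /\ tgts A = y /\ C A = ED fuel x y.
Proof.
  induction fuel as [|f IH]; intros x y Hf; [lia|].
  rewrite EDp_S.
  destruct (rev x) as [|a ru] eqn:Ex.
  { apply rev_nil_inv in Ex. subst x.
    destruct (rev y) as [|b rv] eqn:Ey.
    { apply rev_nil_inv in Ey. subst. exists []. simpl. auto. }
    destruct y as [|c w]; [discriminate|].
    exists [Ins c w]. simpl. rewrite app_nil_r. repeat split. unfold Ap. simpl. ring. }
  destruct (rev y) as [|b rv] eqn:Ey.
  { apply rev_nil_inv in Ey. subst y.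
    destruct x as [|c w]; [discriminate|].
    exists [Del c w]. simpl. rewrite app_nil_r. repeat split. unfold Bp. simpl. ring. }
  assert (Hx : x = rev ru ++ [a]) by (rewrite <- (rev_involutive x), Ex; auto).
  assert (Hy : y = rev rv ++ [b]) by (rewrite <- (rev_involutive y), Ey; auto).
  match goal with |- exists A, _ /\ _ /\ C A = fold_right Rmin ?b0 ?L => destruct (fr_cases b0 L) as [E|E]; [rewrite E|] end.
  - destruct (IH (rev ru) (rev rv)) as [A [h1 [h2 h3]]].
    { rewrite Hx, Hy, !length_app in Hf. simpl in Hf. lia. }
    exists (A ++ [Sub a b]). rewrite srcs_app, tgts_app, C_app, h1, h2, h3. simpl. repeat split; auto. ring.
  - apply in_app_or in E. destruct E as [E|E]; apply in_map_iff in E; destruct E as [k [Ek Hk]]; apply in_seq in Hk; rewrite <- Ek.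
    + destruct (IH x (firstn (length y - k) y)) as [A [h1 [h2 h3]]].
      { rewrite length_firstn. lia. }
      destruct (skipn (length y - k) y) as [|c w] eqn:Es.
      { exfalso. assert (length (skipn (length y - k) y) = 0)%nat by (rewrite Es; auto).
        rewrite length_skipn in H. lia. }
      exists (A ++ [Ins c w]). rewrite srcs_app, tgts_app, C_app, h1, h2, h3. simpl.
      rewrite !app_nil_r. repeat split; auto.
      rewrite <- Es, firstn_skipn. auto. unfold Ap. simpl. ring.
    + destruct (IH (firstn (length x - k) x) y) as [A [h1 [h2 h3]]].
      { rewrite length_firstn. lia. }
      destruct (skipn (length x - k) x) as [|c w] eqn:Es.
      { exfalso. assert (length (skipn (length x - k) x) = 0)%nat by (rewrite Es; auto).
        rewrite length_skipn in H. lia. }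
      exists (A ++ [Del c w]). rewrite srcs_app, tgts_app, C_app, h1, h2, h3. simpl.
      rewrite !app_nil_r. repeat split; auto.
      rewrite <- Es, firstn_skipn. auto. unfold Bp. simpl. ring.
Qed.

Hypothesis Ha : gap_penalty (fun w => rpow (alpha w) p).
Hypothesis Hb : gap_penalty (fun w => rpow (beta w) p).
Hypothesis Hdq : quasi_metric d.
Hypothesis Hds : separating d.

Definition E x y := ED (S (length x + length y)) x y.

Lemma E_attain x y : exists A, srcs A = x /\ tgts A = y /\ C A = E x y.
Proof. apply ED_attain. lia. Qed.
Lemma E_upper A : E (srcs A) (tgts A) <= C A.
Proof. apply ED_upper. lia. Qed.
Lemma E_nonneg x y : 0 <= E x y.
Proof. destruct (E_attain x y) as [A [_ [_ h]]]. rewrite <- h. apply C_nonneg. Qed.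

Lemma dist_eq x y : edit_dist d alpha beta p x y = r p (E x y).
Proof. unfold edit_dist, r, E. replace (1 / p) with (/ p) by (field; lra). reflexivity. Qed.

Lemma C_zero A : C A = 0 -> srcs A = tgts A.
Proof.
  induction A as [|o A IH]; simpl; auto. intros H.
  pose proof (cost_nonneg o); pose proof (C_nonneg A).
  assert (Ho : cost o = 0) by lra. assert (HA : C A = 0) by lra.
  rewrite (IH HA). destruct o as [a b|c w|c w]; simpl in Ho.
  - assert (d a b = 0).
    { destruct (Rlt_dec 0 (d a b)) as [hlt|hlt]. pose proof (rpow_pos (d a b) p hlt). lra.
      pose proof (Dnn a b). lra. }
    apply Hds in H2. subst. auto.
  - exfalso. destruct Ha as [Hpos _]. assert (c :: w <> []) by discriminate.
    pose proof (Hpos _ H2). unfold Ap in Ho. simpl in Ho. lra.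
  - exfalso. destruct Hb as [Hpos _]. assert (c :: w <> []) by discriminate.
    pose proof (Hpos _ H2). unfold Bp in Ho. simpl in Ho. lra.
Qed.

Definition lift1 (A : list op) := map (fun o => mkc o (cost o) 0) A.
Definition lift2 (A : list op) := map (fun o => mkc o 0 (cost o)) A.
Lemma lift1_ops A : ops (lift1 A) = A. Proof. unfold ops, lift1. rewrite map_map. apply map_id. Qed.
Lemma lift2_ops A : ops (lift2 A) = A. Proof. unfold ops, lift2. rewrite map_map. apply map_id. Qed.
Lemma lift1_PP A : PP (lift1 A) = C A. Proof. induction A; simpl; auto. rewrite IHA; auto. Qed.
Lemma lift1_QQ A : QQ (lift1 A) = 0. Proof. induction A; simpl; auto. rewrite IHA; ring. Qed.
Lemma lift2_PP A : PP (lift2 A) = 0. Proof. induction A; simpl; auto. rewrite IHA; ring. Qed.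
Lemma lift2_QQ A : QQ (lift2 A) = C A. Proof. induction A; simpl; auto. rewrite IHA; auto. Qed.
Lemma lift1_valid A : Forall lvalid (lift1 A).
Proof.
  induction A; simpl; constructor; auto. pose proof (cost_nonneg a).
  split. split; simpl; [lra|split; lra]. intros; simpl; lra.
Qed.
Lemma lift2_valid A : Forall rvalid (lift2 A).
Proof.
  induction A; simpl; constructor; auto. pose proof (cost_nonneg a).
  split. split; simpl; [lra|split; lra]. intros; simpl; lra.
Qed.

Lemma final_sec : quasi_metric (edit_dist d alpha beta p) /\ separating (edit_dist d alpha beta p).
Proof.
  assert (Sep : separating (edit_dist d alpha beta p)).
  { intros x y H. rewrite dist_eq in H. apply rpow_zero_inv in H; [|apply E_nonneg].
    destruct (E_attain x y) as [A [h1 [h2 h3]]]. rewrite <- h1, <- h2. apply C_zero. lra. }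
  split; [|exact Sep]. split; [|split].
  - intros; apply rpow_nonneg.
  - intros x y; split.
    + intros [H _]. apply Sep; auto.
    + intros Exy; subst y.
      assert (E x x = 0).
      { pose proof (E_nonneg x x).
        pose proof (E_upper (map (fun a => Sub a a) x)).
        assert (srcs (map (fun a => Sub a a) x) = x) by (clear; induction x; simpl; f_equal; auto).
        assert (tgts (map (fun a => Sub a a) x) = x) by (clear; induction x; simpl; f_equal; auto).
        assert (C (map (fun a => Sub a a) x) = 0).
        { clear -Hdq Hp. induction x; simpl; auto. rewrite IHx.
          destruct Hdq as [_ [Hq _]]. destruct (proj2 (Hq a a) eq_refl) as [h _]. rewrite h.
          rewrite rpow_le0 by lra. ring. }
        rewrite H1, H2, H3 in H0. lra. }
      rewrite dist_eq, H. split; apply r0; auto.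
  - intros x y z. rewrite !dist_eq.
    destruct (E_attain x y) as [A1 [h1 [h2 h3]]].
    destruct (E_attain y z) as [A2 [h4 [h5 h6]]].
    assert (G := main (S (length (lift1 A1) + length (lift2 A2))) (lift1 A1) (lift2 A2) ltac:(lia)
                  (lift1_valid A1) (lift2_valid A2)).
    rewrite lift1_ops, lift2_ops, h2, h4 in G. specialize (G eq_refl).
    rewrite h1, h5, lift1_PP, lift1_QQ, lift2_PP, lift2_QQ in G.
    destruct G as [_ [_ [A [g1 [g2 g3]]]]].
    rewrite Rplus_0_r, Rplus_0_l, h3, h6 in g3.
    pose proof (E_upper A). rewrite g1, g2 in H.
    eapply Rle_trans; [|exact g3]. apply r_mono; auto. split; auto. apply E_nonneg.
Qed.

End Comb.

Theorem theoremA1 (Sigma : Type) (p : R) (d : Sigma -> Sigma -> R)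
    (alpha beta : list Sigma -> R)
    (Hp : 1 <= p)
    (Hdq : quasi_metric d) (Hds : separating d)
    (Ha : gap_penalty (fun w => rpow (alpha w) p))
    (Hb : gap_penalty (fun w => rpow (beta w) p))
    (W1 : forall (a b : Sigma) (u v : list Sigma),
        rpow (d a b) p + rpow (ext0 beta (u ++ b :: v)) p
        >= rpow (ext0 beta (u ++ a :: v)) p)
    (W2 : forall (a b : Sigma) (u v : list Sigma),
        rpow (d a b) p + rpow (ext0 alpha (u ++ a :: v)) p
        >= rpow (ext0 alpha (u ++ b :: v)) p)
    (W3 : forall u v x : list Sigma,
        rpow (ext0 beta (u ++ v)) p + rpow (ext0 beta x) p
        >= rpow (ext0 beta (u ++ x ++ v)) p)
    (W4 : forall u v x : list Sigma,
        rpow (ext0 alpha (u ++ v)) p + rpow (ext0 alpha x) p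
        >= rpow (ext0 alpha (u ++ x ++ v)) p)
    (W5 : forall u v x : list Sigma,
        rpow (ext0 beta (u ++ x ++ v)) p + rpow (ext0 alpha x) p
        >= rpow (ext0 beta (u ++ v)) p)
    (W6 : forall u v x : list Sigma,
        rpow (ext0 alpha (u ++ x ++ v)) p + rpow (ext0 beta x) p
        >= rpow (ext0 alpha (u ++ v)) p)
    (W7 : forall u v x : list Sigma,
        rpow (ext0 alpha (u ++ x)) p + rpow (ext0 beta (x ++ v)) p
        >= rpow (ext0 alpha u) p + rpow (ext0 beta v) p)
    (W8 : forall u v x : list Sigma,
        rpow (ext0 beta (u ++ x)) p + rpow (ext0 alpha (x ++ v)) p
        >= rpow (ext0 beta u) p + rpow (ext0 alpha v) p) :
  quasi_metric (edit_dist d alpha beta p) /\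
  separating (edit_dist d alpha beta p).
Proof.
  pose proof Hdq as [Hnn [_ Htri]].
  eapply final_sec; eauto.
Qed.
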